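(* Let $A$ be a Nakayama algebra with $n$ simple modules. The following are equivalent: (1) $A$ has finite global dimension and magnitude one; (2) $A$ has a unique (up to isomorphism) indecomposable projective module of dimension $n$; (3) $A$ has finite global dimension and Loewy length at least $n$.
   Context: Nakayama algebras are connected finite-dimensional algebras over an algebraically closed field $K$ all of whose indecomposable modules are uniserial, given as bound quiver algebras on a linear quiver $0\to\cdots\to n-1$ or cyclic quiver $0\to\cdots\to n-1\to 0$ with admissible relations. The Kupisch series is $[c_0,\dots,c_{n-1}]$ with $c_i=\dim_K e_iA$ the dimension of the $i$-th indecomposable projective module; the Loewy length is $\max_i c_i$. The Cartan matrix $\mathbf C_A$ has entries $\dim_K e_iAe_j$; for $A$ of finite global dimension it is invertible, and the magnitude of $A$ is the sum of all entries of $\mathbf C_A^{-1}$. *)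

(* Defs.v *)
(* Nakayama algebras encoded by their Kupisch series. *)
From HB Require Import structures.
From mathcomp Require Import all_boot all_order all_algebra.
Set Implicit Arguments. Unset Strict Implicit. Unset Printing Implicit Defensive.
Import Order.TTheory GRing.Theory Num.Theory.

(* Vertices are 0..n-1; arrows i -> i+1 (and n-1 -> 0 in the cyclic case).
   The Kupisch series is c : nat -> nat, only its values c 0 .. c (n-1)
   are meaningful: c i = dim_K e_i A. A path of length t starting at i
   ends at vertex (i + t) %% n (in the linear case i + t < n anyway). *)
Definition vtx (n i t : nat) : nat := (i + t) %% n.

Definition linear_kupisch (n : nat) (c : nat -> nat) : Prop :=
  [/\ 0 < n, c n.-1 = 1 &
      forall i, i < n.-1 -> 2 <= c i /\ c i <= (c i.+1).+1].

Definition cyclic_kupisch (n : nat) (c : nat -> nat) : Prop :=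
  0 < n /\ forall i, i < n -> 2 <= c i /\ c i <= (c (vtx n i 1)).+1.

Definition nakayama_kupisch (n : nat) (c : nat -> nat) : Prop :=
  linear_kupisch n c \/ cyclic_kupisch n c.

(* Indecomposable modules are uniserial: M(i,k) = e_i A / e_i J^k,
   1 <= k <= c i (top S_i, length k). Its projective cover is e_i A = M(i, c i);
   it is projective iff k = c i, and otherwise its first syzygy is
   e_i J^k = M(vtx n i k, c i - k).  [pd_fin f n c i k] says that the syzygy
   sequence of M(i,k) reaches a projective module within f steps, i.e.
   pd M(i,k) <= f. *)
Fixpoint pd_fin (f n : nat) (c : nat -> nat) (i k : nat) : bool :=
  if k == c i then true
  else match f with
       | 0 => false
       | f'.+1 => pd_fin f' n c (vtx n i k) (c i - k)
       end.

Definition finite_gldim (n : nat) (c : nat -> nat) : Prop :=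
  forall i, i < n -> exists f, pd_fin f n c i 1.

(* Cartan matrix: (C_A)_{ij} = dim_K e_i A e_j = number of paths of length
   t < c i starting at i and ending at j. *)
Definition cartan (n : nat) (c : nat -> nat) : 'M[rat]_n :=
  \matrix_(i < n, j < n) ((#|[set t : 'I_(c i) | vtx n i t == j]|)%:R)%R.

Definition magnitude (n : nat) (c : nat -> nat) : rat :=
  (\sum_(i < n) \sum_(j < n) (invmx (cartan n c)) i j)%R.

Definition loewy_length (n : nat) (c : nat -> nat) : nat :=
  \max_(i < n) c i.

Definition num_proj_dim (n : nat) (c : nat -> nat) (d : nat) : nat :=
  #|[set i : 'I_n | c i == d]|.

(* Main.v *)
Require Import Defs.
From HB Require Import structures.
From mathcomp Require Import all_boot all_order all_algebra.
From mathcomp Require Import zify.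
Import Order.TTheory GRing.Theory Num.Theory.
Set Implicit Arguments. Unset Strict Implicit. Unset Printing Implicit Defensive.

Definition cnt (n i k j : nat) : nat := \sum_(t < k) (vtx n i t == j).

Lemma card_cnt (m : nat) (P : pred nat) :
  #|[set t : 'I_m | P t]| = \sum_(t < m) P t.
Proof.
rewrite -sum1_card big_mkcond /=; apply: eq_bigr => t _; rewrite inE.
by case: (P t).
Qed.

Lemma cartanE n c (i j : 'I_n) : cartan n c i j = ((cnt n i (c i) j)%:R)%R.
Proof. by rewrite mxE (card_cnt _ (fun t => vtx n i t == j)). Qed.

Lemma sum_widen (F : nat -> nat) m m' : m <= m' ->
  \sum_(t < m) F t <= \sum_(t < m') F t.
Proof.
move=> H; rewrite -!(big_mkord xpredT F) [X in _ <= X](big_cat_nat (n:=m)) //= /=.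
exact: leq_addr.
Qed.

Lemma cnt_split n i k m j : k <= m ->
  cnt n i m j = cnt n i k j + cnt n (vtx n i k) (m - k) j.
Proof.
move=> H; rewrite /cnt.
rewrite -(big_mkord xpredT (fun t => nat_of_bool (vtx n i t == j))).
rewrite -(big_mkord xpredT (fun t => nat_of_bool (vtx n i t == j))).
rewrite -(big_mkord xpredT (fun t => nat_of_bool (vtx n (vtx n i k) t == j))).
rewrite (big_cat_nat (n:=k)) //=.
congr (_ + _).
rewrite -{1}(add0n k) big_addn; apply: eq_bigr => t _.
by rewrite /vtx modnDml [t + k]addnC addnA.
Qed.

Lemma count_one n t j : 0 < n -> j < n ->
  \sum_(r < n) ((r + t) %% n == j) = 1.
Proof.
move=> n0 jn.
have r0n : (j + (n - t %% n)) %% n < n by rewrite ltn_pmod.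
rewrite (bigD1 (Ordinal r0n)) //=.
have -> : ((j + (n - t %% n)) %% n + t) %% n == j.
  rewrite modnDml -modnDmr -addnA subnK; last by rewrite ltnW // ltn_pmod.
  by rewrite modnDr modn_small.
rewrite big1 // => r /= Hr; case: eqP => // Hr'; exfalso; move/negP: Hr; apply.
rewrite -val_eqE /=.
move: Hr' => Hr.
have : (r + t == (j + (n - t %% n)) %% n + t %[mod n]).
  rewrite Hr; apply/eqP; rewrite modnDml -modnDmr -addnA subnK; last by rewrite ltnW // ltn_pmod.
  by rewrite modnDr modn_small.
by rewrite eqn_modDr modn_mod modn_small.
Qed.

Definition ev (n i : nat) : 'rV[rat]_n := \row_(j < n) (((j : nat) == i)%:R)%R.

Fixpoint res (n : nat) (c : nat -> nat) (f i k : nat) : 'rV[rat]_n :=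
  if k == c i then ev n i
  else match f with
       | 0 => 0%R
       | f'.+1 => (ev n i - res n c f' (vtx n i k) (c i - k))%R
       end.

Fixpoint rs (n : nat) (c : nat -> nat) (f i k : nat) : nat :=
  if k == c i then 1
  else match f with
       | 0 => 0
       | f'.+1 => 1 - rs n c f' (vtx n i k) (c i - k)
       end.

Lemma rs_le1 n c f i k : rs n c f i k <= 1.
Proof. by case: f => [|f] /=; case: ifP => //; rewrite leq_subr. Qed.

Lemma sum_ev n i : i < n -> (\sum_(j < n) ev n i 0 j = 1)%R.
Proof.
move=> Hi; rewrite (bigD1 (Ordinal Hi)) //= mxE eqxx big1 ?addr0 // => j.
by rewrite mxE -val_eqE /= => /negbTE ->.
Qed.

Lemma vtx_lt n i k : 0 < n -> vtx n i k < n.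
Proof. by move=> n0; rewrite /vtx ltn_pmod. Qed.

Lemma res_sum n c f i k : 0 < n -> i < n ->
  (\sum_(j < n) res n c f i k 0 j = (rs n c f i k)%:R)%R.
Proof.
move=> n0; elim: f i k => [|f IH] i k Hi /=; case: ifP => _; rewrite ?sum_ev //.
- by rewrite big1 // => j _; rewrite mxE.
- rewrite (eq_bigr (fun j => ev n i 0 j - res n c f (vtx n i k) (c i - k) 0 j))%R;
    last by move=> j _; rewrite !mxE.
  rewrite sumrB sum_ev // IH ?vtx_lt // natrB //; exact: rs_le1.
Qed.

Lemma ev_row n (i : 'I_n) : ev n i = row i (1%:M)%R.
Proof. by apply/rowP => j; rewrite !mxE eq_sym. Qed.

Lemma ev_mul n (i : 'I_n) (A : 'M[rat]_n) : (ev n i *m A)%R = row i A.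
Proof. by rewrite ev_row -row_mul mul1mx. Qed.

Definition dimv n i k : 'rV[rat]_n := \row_(j < n) ((cnt n i k j)%:R)%R.

Lemma res_mul n c f i k : 0 < n ->
  (forall i k, i < n -> k < c i -> c i <= c (vtx n i k) + k) ->
  i < n -> 0 < k <= c i -> pd_fin f n c i k ->
  (res n c f i k *m cartan n c)%R = dimv n i k.
Proof.
move=> n0 Hinv; elim: f i k => [|f IH] i k Hi /andP[k0 kc] /=; case: ifP => [/eqP-> _|kc' //].
- rewrite (_ : ev n i = ev n (Ordinal Hi)) // ev_mul; apply/rowP => j.
  by rewrite !mxE (card_cnt _ (fun t => vtx n i t == j)).
- rewrite (_ : ev n i = ev n (Ordinal Hi)) // ev_mul; apply/rowP => j.
  by rewrite !mxE (card_cnt _ (fun t => vtx n i t == j)).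
- move=> Hpd; have klt : k < c i by rewrite ltn_neqAle kc' kc.
  rewrite mulmxBl IH ?vtx_lt //; last first.
    by rewrite subn_gt0 klt /= leq_subLR addnC Hinv.
  rewrite (_ : ev n i = ev n (Ordinal Hi)) // ev_mul; apply/rowP => j.
  rewrite !mxE (card_cnt _ (fun t => vtx n i t == j)) -/(cnt n i (c i) j).
  by rewrite (cnt_split _ _ _ kc) natrD addrK.
Qed.

Definition Hinv_prop n c := forall i k, i < n -> k < c i -> c i <= c (vtx n i k) + k.

Lemma gl_X n c : 0 < n -> Hinv_prop n c -> (forall i, i < n -> 0 < c i) ->
  finite_gldim n c ->
  exists X : 'M[rat]_n, (X *m cartan n c = 1%:M)%R /\
    exists s : 'I_n -> nat, (forall i, s i <= 1) /\
      (forall i, \sum_(j < n) X i j = (s i)%:R)%R.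
Proof.
move=> n0 Hinv cpos gl.
have : forall i : 'I_n, exists f, pd_fin f n c i 1 by move=> i; apply: gl.
case/fin_all_exists => F HF.
exists (\matrix_(i, j) res n c (F i) i 1 0 j)%R; split.
  apply/row_matrixP => i; rewrite row_mul.
  have -> : row i (\matrix_(i, j) res n c (F i) i 1 0 j)%R = res n c (F i) i 1.
    by apply/rowP => j; rewrite !mxE.
  rewrite res_mul //; last by rewrite /= cpos.
  by apply/rowP => j; rewrite !mxE /cnt big_ord1 /vtx addn0 modn_small.
exists (fun i => rs n c (F i) i 1); split => [i|i]; first exact: rs_le1.
rewrite -res_sum //; apply: eq_bigr => j _; by rewrite mxE.
Qed.

Lemma magnitude_X n c (X : 'M[rat]_n) : (X *m cartan n c = 1%:M)%R ->
  magnitude n c = (\sum_(i < n) \sum_(j < n) X i j)%R.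
Proof.
move=> XC.
have CX := mulmx1C XC.
have [Cu _] := mulmx1_unit CX.
rewrite /magnitude; have -> : invmx (cartan n c) = X.
  by rewrite -[X]mulmx1 -(mulmxV Cu) mulmxA XC mul1mx.
by rewrite /magnitude.
Qed.

Definition dsum (n : nat) (c : nat -> nat) (i : nat) : nat := \sum_(r < n) cnt n r (c r) i.

Lemma key_identity n c (X : 'M[rat]_n) (s : 'I_n -> nat) :
  (cartan n c *m X = 1%:M)%R ->
  (forall i, \sum_(j < n) X i j = (s i)%:R)%R ->
  \sum_(i < n) s i * dsum n c i = n.
Proof.
move=> CX Hs.
apply/eqP; rewrite -(eqr_nat rat) natr_sum; apply/eqP.
have E : (\sum_(j < n) \sum_(r < n) (cartan n c *m X) r j = n%:R :> rat)%R.
  rewrite CX.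
  rewrite (eq_bigr (fun _ => 1%R)); first by rewrite sumr_const card_ord.
  move=> j _; rewrite (bigD1 j) //= mxE eqxx big1 ?addr0 // => r.
  by rewrite mxE => /negbTE ->.
rewrite -E; symmetry.
transitivity (\sum_(j < n) \sum_(r < n) \sum_(i < n) cartan n c r i * X i j)%R.
  by apply: eq_bigr => j _; apply: eq_bigr => r _; rewrite mxE.
rewrite exchange_big /=.
rewrite (eq_bigr (fun r : 'I_n => \sum_(i < n) \sum_(j < n) cartan n c r i * X i j))%R;
  last by move=> r _; rewrite exchange_big.
rewrite exchange_big /=; apply: eq_bigr => i _.
rewrite natrM mulrC -Hs /dsum natr_sum mulr_suml; apply: eq_bigr => r _.
by rewrite mulr_sumr; apply: eq_bigr => j _; rewrite cartanE.
Qed.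

Lemma dsum_le n c i B : 0 < n -> i < n -> (forall r, r < n -> c r <= B) ->
  dsum n c i <= B.
Proof.
move=> n0 Hi HB; rewrite /dsum.
apply: (@leq_trans (\sum_(r < n) \sum_(t < B) (vtx n r t == i))).
  apply: leq_sum => r _; apply: (sum_widen (fun t => nat_of_bool (vtx n r t == i))); exact: HB.
rewrite exchange_big /=.
rewrite (eq_bigr (fun _ => 1)); first by rewrite sum_nat_const card_ord muln1.
by move=> t _; rewrite (eq_bigr (fun r : 'I_n => nat_of_bool ((r + t) %% n == i))) ?count_one.
Qed.

Lemma dsum_ge n c i : 0 < n -> i < n -> (forall r, r < n -> n.+1 <= c r) ->
  n.+1 <= dsum n c i.
Proof.
move=> n0 Hi HB; rewrite /dsum.
apply: (@leq_trans (\sum_(r < n) \sum_(t < n.+1) (vtx n r t == i))); last first.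
  apply: leq_sum => r _; apply: (sum_widen (fun t => nat_of_bool (vtx n r t == i))); exact: HB.
rewrite exchange_big /=.
rewrite (eq_bigr (fun _ => 1)); first by rewrite sum_nat_const card_ord muln1.
by move=> t _; rewrite (eq_bigr (fun r : 'I_n => nat_of_bool ((r + t) %% n == i))) ?count_one.
Qed.

Lemma pd_fin_S f n c i k :
  pd_fin f.+1 n c i k = (k == c i) || pd_fin f n c (vtx n i k) (c i - k).
Proof. by rewrite /=; case: ifP. Qed.

Lemma lin_bound n c : linear_kupisch n c -> forall i, i < n -> c i + i <= n.
Proof.
case=> n0 cl Hl.
suff H : forall m i, i < n -> n - i = m.+1 -> c i + i <= n.
  by move=> i Hi; apply: (H (n - i).-1 i Hi); lia.
elim=> [|m IH] i Hi Hm.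
  have -> : i = n.-1 by lia.
  rewrite cl; lia.
have Hi1 : i < n.-1 by lia.
have := (Hl i Hi1).2; have := IH i.+1 ltac:(lia) ltac:(lia); lia.
Qed.

Lemma lin_mono n c : linear_kupisch n c ->
  forall k i, i + k < n -> c i <= c (i + k) + k.
Proof.
case=> n0 cl Hl; elim=> [|k IH] i Hik; first by rewrite addn0 addn0.
have := IH i ltac:(lia); have := (Hl (i + k) ltac:(lia)).2.
rewrite !addnS; lia.
Qed.

Lemma lin_inv n c : linear_kupisch n c -> Hinv_prop n c.
Proof.
move=> Hl i k Hi Hk; have := lin_bound Hl Hi => Hb.
rewrite /vtx modn_small; last by lia.
apply: (lin_mono Hl); lia.
Qed.

Lemma lin_pos n c : linear_kupisch n c -> forall i, i < n -> 0 < c i.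
Proof.
case=> n0 cl Hl i Hi; have [->|ne] := eqVneq i n.-1; first by rewrite cl.
have := (Hl i ltac:(lia)).1; lia.
Qed.

Lemma lin_gl n c : linear_kupisch n c -> finite_gldim n c.
Proof.
move=> Hl; have n0 : 0 < n by case: Hl.
suff H : forall f i k, i < n -> 0 < k <= c i -> n <= f + i -> pd_fin f n c i k.
  move=> i Hi; exists n; apply: H => //; first by rewrite (lin_pos Hl).
  exact: leq_addr.
elim=> [|f IH] i k Hi Hk Hf; first by lia.
rewrite pd_fin_S; case: eqP => //= Hkc.
have Hb := lin_bound Hl Hi.
have Hik : i + k < n by lia.
rewrite /vtx modn_small //; apply: IH => //.
have := lin_mono Hl Hik; lia.
lia.
Qed.

Lemma cyc_inv n c : cyclic_kupisch n c -> Hinv_prop n c.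
Proof.
case=> n0 Hc i k Hi _; rewrite /vtx.
elim: k => [|k IH]; first by rewrite !addn0 modn_small.
have := (Hc ((i + k) %% n) (ltn_pmod _ n0)).2.
rewrite /vtx modnDml addn1 !addnS; lia.
Qed.

Lemma cyc_pos n c : cyclic_kupisch n c -> forall i, i < n -> 0 < c i.
Proof. by case=> n0 Hc i Hi; have := (Hc i Hi).1; lia. Qed.

Lemma ivt (s : nat -> nat) m L : m <= s 0 -> s L <= m ->
  (forall k, k < L -> s k <= (s k.+1).+1) -> exists2 k, k <= L & s k = m.
Proof.
elim: L s => [|L IH] s H0 HL Hs; first by exists 0 => //; lia.
have [E|ne] := eqVneq (s 0) m; first by exists 0.
have := Hs 0 isT => H1.
have [k Hk Hsk] := IH (fun k => s k.+1) ltac:(lia) HL (fun k Hk => Hs k.+1 Hk).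
by exists k.+1.
Qed.

Definition cp n (c : nat -> nat) i0 z := c ((z + i0) %% n).
Definition hh n c i0 z := z + cp n c i0 z - n.
Definition phi n c i0 z :=
  if z == 0 then 0 else if hh n c i0 z < z then z else n - z.

Lemma cp_step n c i0 z : cyclic_kupisch n c ->
  cp n c i0 z <= (cp n c i0 z.+1).+1.
Proof.
case=> n0 Hc; have := (Hc ((z + i0) %% n) (ltn_pmod _ n0)).2.
by rewrite /cp /vtx modnDml addn1 addSn.
Qed.

Lemma G_mono n c i0 z w : cyclic_kupisch n c -> z <= w ->
  z + cp n c i0 z <= w + cp n c i0 w.
Proof.
move=> Hc; elim: w => [|w IH]; first by rewrite leqn0 => /eqP ->.
rewrite leq_eqVlt => /orP[/eqP -> //|Hz].
have := IH Hz; have := cp_step i0 w Hc; lia.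
Qed.

Lemma cp0 n c i0 : i0 < n -> c i0 = n -> cp n c i0 0 = n.
Proof. by move=> Hi Hn; rewrite /cp add0n modn_small. Qed.

Lemma cpn n c i0 : i0 < n -> c i0 = n -> cp n c i0 n = n.
Proof. by move=> Hi Hn; rewrite /cp addnC modnDr modn_small. Qed.

Lemma cp_fix n c i0 z : i0 < n -> (forall i, i < n -> c i = n -> i = i0) ->
  0 < z < n -> cp n c i0 z = n -> False.
Proof.
move=> Hi Hu /andP[z0 zn] E.
have n0 : 0 < n by lia.
have := Hu _ (ltn_pmod _ n0) E => E2.
have : (z + i0 == 0 + i0 %[mod n]) by rewrite E2 add0n modn_small.
rewrite eqn_modDr mod0n modn_small //; lia.
Qed.

Lemma term n c i0 : cyclic_kupisch n c -> i0 < n -> c i0 = n ->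
  (forall i, i < n -> c i = n -> i = i0) ->
  forall m U V, U < V -> V <= n -> phi n c i0 U + phi n c i0 V <= m ->
  pd_fin m.*2.+1 n c ((U + i0) %% n) (V - U).
Proof.
move=> Hc Hi Hn Hu.
have n0 : 0 < n by case: Hc.
have c0 := cp0 Hi Hn; have cn := cpn Hi Hn.
have Gm := fun z w => @G_mono n c i0 z w Hc.
have Fx := fun z => @cp_fix n c i0 z Hi Hu.
have hb : forall z, z <= n -> n <= z + cp n c i0 z <= n + n.
  move=> z zn; have := Gm 0 z (leq0n _); have := Gm z n zn; lia.
have hmono : forall z w, z <= w -> hh n c i0 z <= hh n c i0 w.
  by move=> z w zw; rewrite /hh leq_sub2r // Gm.
have hfix : forall z, 0 < z < n -> hh n c i0 z = z -> False.
  move=> z zr E; apply: (Fx z zr); move: E; rewrite /hh.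
  have := hb z ltac:(lia); lia.
have phi_dec : forall z, 0 < z < n ->
    phi n c i0 (hh n c i0 z) < phi n c i0 z.
  move=> z zr; have zn : z <= n by lia.
  have hzn : hh n c i0 z <= n by rewrite /hh; have := hb z zn; lia.
  rewrite /phi; have -> : (z == 0) = false by lia.
  have hzn' := hzn.
  move Ey: (hh n c i0 z) hzn => y hyn.
  have [hz|hz] := ltnP y z.
  - have hhz : hh n c i0 y <= y by rewrite -{2}Ey; apply: hmono; lia.
    have [hy0|hz0] := eqVneq y 0; first by lia.
    have [hz2|hz2] := ltnP (hh n c i0 y) y; first by [].
    exfalso; apply: (hfix y); lia.
  - have hz' : z < y.
      rewrite ltn_neqAle hz andbT; apply/negP => /eqP E.
      by apply: (hfix z zr); rewrite Ey -E.
    have hhz : y <= hh n c i0 y by rewrite -{1}Ey; apply: hmono; lia.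
    have [hy0|hy0] := eqVneq y 0; first by lia.
    have [h3|h3] := ltnP (hh n c i0 y) y; lia.
have h0 : hh n c i0 0 = 0 by rewrite /hh c0 add0n subnn.
have hn : hh n c i0 n = n by rewrite /hh cn addnK.
have phi_le : forall z, z <= n -> phi n c i0 (hh n c i0 z) <= phi n c i0 z.
  move=> z zn; have [->|z0] := posnP z; first by rewrite h0.
  have [zn'|] := ltnP z n; first by apply: ltnW; apply: phi_dec; lia.
  move=> nz; have E : z = n by lia.
  by rewrite E hn.
elim=> [|m IH] U V UV Vn Hphi.
all: have [/andP[/eqP U0 /eqP Vn']|ne] := boolP ((U == 0) && (V == n)).
- by rewrite U0 Vn' subn0 add0n modn_small // pd_fin_S Hn eqxx.
- have : phi n c i0 (hh n c i0 U) + phi n c i0 (hh n c i0 V) < phi n c i0 U + phi n c i0 V.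
    have [U0|U0] := posnP U.
    + have Vr : 0 < V < n by move: ne; rewrite U0 eqxx /=; lia.
      have := phi_dec V Vr; have := phi_le U ltac:(lia); lia.
    + have := phi_dec U ltac:(lia); have := phi_le V Vn; lia.
  lia.
- by rewrite U0 Vn' subn0 add0n modn_small // pd_fin_S Hn eqxx.
- have dec : phi n c i0 (hh n c i0 U) + phi n c i0 (hh n c i0 V) < phi n c i0 U + phi n c i0 V.
    have [U0|U0] := posnP U.
    + have Vr : 0 < V < n by move: ne; rewrite U0 eqxx /=; lia.
      have := phi_dec V Vr; have := phi_le U ltac:(lia); lia.
    + have := phi_dec U ltac:(lia); have := phi_le V Vn; lia.
  have hbU := hb U ltac:(lia); have hbV := hb V Vn.
  have GUV := Gm U V ltac:(lia).
  rewrite doubleS pd_fin_S; case: eqP => // H1; rewrite orFb.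
  have -> : vtx n ((U + i0) %% n) (V - U) = (V + i0) %% n.
    by rewrite /vtx modnDml; congr (_ %% n); lia.
  rewrite pd_fin_S; case: eqP => // H2; rewrite orFb.
  rewrite -/(cp n c i0 U) -/(cp n c i0 V) in H1 H2 *.
  have -> : vtx n ((V + i0) %% n) (cp n c i0 U - (V - U)) = (hh n c i0 U + i0) %% n.
    rewrite /vtx modnDml /hh.
    have -> : V + i0 + (cp n c i0 U - (V - U)) = (U + cp n c i0 U - n + i0) + n by lia.
    by rewrite modnDr.
  have -> : cp n c i0 V - (cp n c i0 U - (V - U)) = hh n c i0 V - hh n c i0 U.
    rewrite /hh; lia.
  apply: IH; [rewrite /hh; lia | rewrite /hh; lia | lia].
Qed.

Lemma cyc_gl n c i0 : cyclic_kupisch n c -> i0 < n -> c i0 = n ->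
  (forall i, i < n -> c i = n -> i = i0) -> finite_gldim n c.
Proof.
move=> Hc Hi Hn Hu i Hin.
have n0 : 0 < n by case: Hc.
set U := (i + (n - i0)) %% n.
have Un : U < n by rewrite ltn_pmod.
exists (phi n c i0 U + phi n c i0 U.+1).*2.+1.
have := term Hc Hi Hn Hu (ltnSn U) Un (leqnn (phi n c i0 U + phi n c i0 U.+1)).
rewrite subSnn.
have -> : (U + i0) %% n = i; last by [].
rewrite /U modnDml -addnA subnK; last by lia.
by rewrite modnDr modn_small.
Qed.

Lemma num1P n c : num_proj_dim n c n = 1 <->
  exists i0, [/\ i0 < n, c i0 = n & forall i, i < n -> c i = n -> i = i0].
Proof.
split.
  move/eqP/cards1P => [x Hx]; exists x.
  have : x \in [set i : 'I_n | c i == n] by rewrite Hx set11.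
  rewrite inE => /eqP cx; split => // i Hi ci.
  have : Ordinal Hi \in [set i : 'I_n | c i == n] by rewrite inE ci.
  by rewrite Hx in_set1 => /eqP E; have := congr1 val E.
move=> [i0 [Hi ci Hu]]; apply/eqP/cards1P; exists (Ordinal Hi).
apply/setP => j; rewrite !inE; apply/eqP/eqP => [cj|->//].
by apply: val_inj => /=; apply: Hu.
Qed.

Lemma cartan_row1 n (c : nat -> nat) (i j : 'I_n) : c i = n -> cartan n c i j = 1%R.
Proof.
move=> ci; rewrite cartanE ci /cnt.
rewrite (eq_bigr (fun t : 'I_n => nat_of_bool ((t + i) %% n == j))).
  by rewrite count_one //; apply: (leq_ltn_trans (leq0n _) (ltn_ord i)).
by move=> t _; rewrite /vtx addnC.
Qed.

Lemma CX_entry n (c : nat -> nat) (X : 'M[rat]_n) (i j : 'I_n) : c i = n ->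
  (cartan n c *m X)%R i j = (\sum_(r < n) X r j)%R.
Proof.
move=> ci; rewrite mxE; apply: eq_bigr => r _; by rewrite cartan_row1 // mul1r.
Qed.

Lemma uniq_inv n (c : nat -> nat) (X : 'M[rat]_n) : (cartan n c *m X = 1%:M)%R ->
  forall a b : 'I_n, c a = n -> c b = n -> a = b.
Proof.
move=> CX a b ca cb; apply/eqP; apply/negPn/negP => ab.
have E1 : (cartan n c *m X)%R a a = 1%R by rewrite CX mxE eqxx.
have E2 : (cartan n c *m X)%R b a = 0%R by rewrite CX mxE eq_sym (negbTE ab).
by move: E1; rewrite CX_entry // -(CX_entry X a cb) E2 => /eqP; rewrite eq_sym oner_eq0.
Qed.

Lemma magnitude1 n (c : nat -> nat) (X : 'M[rat]_n) (i0 : 'I_n) : (cartan n c *m X = 1%:M)%R ->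
  c i0 = n -> (\sum_(i < n) \sum_(j < n) X i j = 1)%R.
Proof.
move=> CX ci.
have E : (\sum_(j < n) (cartan n c *m X) i0 j = 1)%R.
  rewrite CX (bigD1 i0) //= mxE eqxx big1 ?addr0 // => j.
  by rewrite mxE eq_sym => /negbTE ->.
rewrite -E exchange_big /=; apply: eq_bigr => j _; by rewrite CX_entry.
Qed.

Theorem proposition4p4 (n : nat) (c : nat -> nat) :
  nakayama_kupisch n c ->
  ((finite_gldim n c /\ magnitude n c = 1%R) <-> num_proj_dim n c n = 1) /\
  (num_proj_dim n c n = 1 <-> (finite_gldim n c /\ n <= loewy_length n c)).
Proof.
move=> Hk.
have n0 : 0 < n by case: Hk => [[]|[]].
have Hinv : Hinv_prop n c by case: Hk => [/lin_inv|/cyc_inv].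
have cpos : forall i, i < n -> 0 < c i by case: Hk => [/lin_pos|/cyc_pos].
have two_gl : num_proj_dim n c n = 1 -> finite_gldim n c.
  move/num1P => [i0 [Hi ci Hu]].
  case: Hk => [/lin_gl //|Hc]; exact: (cyc_gl Hc Hi ci Hu).
have gl_uniq : finite_gldim n c -> (exists2 i0, i0 < n & c i0 = n) ->
    num_proj_dim n c n = 1.
  move=> gl [i0 Hi ci].
  have [X [XC _]] := gl_X n0 Hinv cpos gl.
  have CX := mulmx1C XC.
  apply/num1P; exists i0; split => // i Hin cin.
  by have := @uniq_inv n c X CX (Ordinal Hin) (Ordinal Hi) cin ci => /(congr1 val).
have gl_le : finite_gldim n c -> exists2 b, b < n & c b <= n.
  move=> gl.
  have [X [XC [s [s1 Hs]]]] := gl_X n0 Hinv cpos gl.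
  have Kid := key_identity (mulmx1C XC) Hs.
  case: (boolP [exists b : 'I_n, c b <= n]) => [/existsP [b Hb]|/existsPn H].
    by exists b.
  exfalso.
  have Hd : forall i : 'I_n, n.+1 <= dsum n c i.
    move=> i; apply: dsum_ge => // r Hr; have := H (Ordinal Hr); rewrite /=; lia.
  have HS : (\sum_(i < n) s i) * n.+1 <= n.
    apply: (@leq_trans (\sum_(i < n) s i * dsum n c i)); last by rewrite Kid.
    rewrite big_distrl /=; apply: leq_sum => i _.
    by rewrite leq_mul2l Hd orbT.
  have S0 : \sum_(i < n) s i = 0 by nia.
  move: Kid; rewrite big1; first lia.
  move=> i _; move/eqP: S0; rewrite sum_nat_eq0 => /forallP/(_ i)/eqP ->.
  by [].
have gl_ge : finite_gldim n c -> magnitude n c = 1%R -> exists2 a, a < n & n <= c a.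
  move=> gl M1.
  have [X [XC [s [s1 Hs]]]] := gl_X n0 Hinv cpos gl.
  have Kid := key_identity (mulmx1C XC) Hs.
  have S1 : \sum_(i < n) s i = 1.
    have E : ((\sum_(i < n) s i)%:R = magnitude n c :> rat)%R.
      by rewrite natr_sum (magnitude_X XC); apply: eq_bigr => i _; rewrite Hs.
    by apply/eqP; rewrite -(pnatr_eq1 rat) E M1.
  case: (boolP [exists a : 'I_n, n <= c a]) => [/existsP [a Ha]|/existsPn H].
    by exists a.
  exfalso.
  have Hd : forall i : 'I_n, dsum n c i <= n.-1.
    move=> i; apply: dsum_le => // r Hr; have := H (Ordinal Hr); rewrite /=; lia.
  have : \sum_(i < n) s i * dsum n c i <= (\sum_(i < n) s i) * n.-1.
    rewrite big_distrl /=; apply: leq_sum => i _.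
    by rewrite leq_mul2l Hd orbT.
  rewrite Kid S1; lia.
have ivt_c : (exists2 a, a < n & n <= c a) -> (exists2 b, b < n & c b <= n) ->
    exists2 i0, i0 < n & c i0 = n.
  move=> [a Ha ca] [b Hb cb].
  case: Hk => [Hl|Hc].
  - have Hl' := Hl; case: Hl' => _ cl Hl2.
    have A1 : n <= c (a + 0) by rewrite addn0.
    have A2 : c (a + (n.-1 - a)) <= n.
      have -> : a + (n.-1 - a) = n.-1 by lia.
      by rewrite cl.
    have A3 : forall k, k < n.-1 - a -> c (a + k) <= (c (a + k.+1)).+1.
      move=> k Hk; have := (Hl2 (a + k) ltac:(lia)).2; by rewrite addnS.
    have [k Hk Hck] := @ivt (fun k => c (a + k)) n (n.-1 - a) A1 A2 A3.
    by exists (a + k) => //; lia.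
  - have Hc' := Hc; case: Hc' => _ Hc2.
    have A1 : n <= c ((a + 0) %% n) by rewrite addn0 modn_small.
    have A2 : c ((a + (b + (n - a)) %% n) %% n) <= n.
      rewrite modnDmr addnA [a + b]addnC -addnA subnKC; last by lia.
      by rewrite modnDr modn_small.
    have A3 : forall k, k < (b + (n - a)) %% n ->
        c ((a + k) %% n) <= (c ((a + k.+1) %% n)).+1.
      move=> k _; have := (Hc2 ((a + k) %% n) (ltn_pmod _ n0)).2.
      by rewrite /vtx modnDml addn1 addnS.
    have [k Hk Hck] := @ivt (fun k => c ((a + k) %% n)) n ((b + (n - a)) %% n) A1 A2 A3.
    by exists ((a + k) %% n) => //; rewrite ltn_pmod.
have lw : n <= loewy_length n c <-> exists2 a, a < n & n <= c a.
  split.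
    move=> Hlw; case: (boolP [exists a : 'I_n, n <= c a]) => [/existsP [a Ha]|/existsPn H].
      by exists a.
    exfalso; have : loewy_length n c <= n.-1.
      apply/bigmax_leqP => i _; have := H i; lia.
    lia.
  move=> [a Ha ca]; apply: (leq_trans ca).
  rewrite /loewy_length; exact: (leq_bigmax (F := fun i : 'I_n => c i) (Ordinal Ha)).
split; split.
- move=> [gl M1]; apply: gl_uniq => //.
  exact: ivt_c (gl_ge gl M1) (gl_le gl).
- move=> H2; have gl := two_gl H2; split => //.
  move/num1P: H2 => [i0 [Hi ci _]].
  have [X [XC _]] := gl_X n0 Hinv cpos gl.
  rewrite (magnitude_X XC).
  exact: (magnitude1 (mulmx1C XC) (i0 := Ordinal Hi)).
- move=> H2; have gl := two_gl H2; split => //.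
  move/num1P: H2 => [i0 [Hi ci _]]; apply/lw; by exists i0 => //; rewrite ci.
- move=> [gl /lw Hlw]; apply: gl_uniq => //; exact: ivt_c Hlw (gl_le gl).
Qed.
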